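(* Let $p>3$ be a prime, let $a$ be a positive integer with $\gcd(a,p)=1$, and let $r\ge0$, $m\ge1$ be integers. Let $b_{2,r,a,m}(n)$ be the number of partitions of $n$ in which every multiplicity has the form $j(pr+a)+pk$ with $j\in\{0,1\}$ and $0\le k\le m-1$. Let $t$ be an integer such that $24ta^{-1}+1$ is a quadratic nonresidue modulo $p$, where $a^{-1}$ is the inverse of $a$ modulo $p$. Then $b_{2,r,a,m}(pn+t)\equiv 0\pmod 2$ for all $n\ge0$.
   Context: Multiplicity of a part means the number of times it appears in the partition. Equivalently, $\sum_{n\ge0}b_{2,r,a,m}(n)q^n=\prod_{n\ge1}\frac{(1-q^{2(pr+a)n})(1-q^{pmn})}{(1-q^{(pr+a)n})(1-q^{pn})}$. *)

(* Defs.v *)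
From mathcomp Require Import all_boot all_order all_algebra.
Set Implicit Arguments. Unset Strict Implicit. Unset Printing Implicit Defensive.
Import Order.TTheory GRing.Theory Num.Theory.

Definition allowed_mult (p r a m mu : nat) : bool :=
  [exists j : 'I_2, exists k : 'I_m, mu == j * (p * r + a) + p * k].

(* A partition of n is encoded by its multiplicity function: part i+1 (i : 'I_n)
   occurs f i times (f i <= n), with sum_i (i+1) * f i = n. *)
Definition b2 (p r a m n : nat) : nat :=
  #|[set f : {ffun 'I_n -> 'I_n.+1} |
      ((\sum_(i < n) (i.+1) * f i)%N == n) &&
      [forall i : 'I_n, allowed_mult p r a m (f i)]]|.

Definition qnr (p : nat) (x : int) : Prop :=
  ~ exists y : int, (y ^+ 2 = x %[mod p%:Z])%Z.

(* Main.v *)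
Require Import Defs.
From mathcomp Require Import all_boot all_order all_algebra.
From mathcomp Require Import zify ring.
Set Implicit Arguments. Unset Strict Implicit. Unset Printing Implicit Defensive.

(* Helper development: Franklin's involution (Euler's pentagonal theorem mod 2). *)


Definition fst (P : pred nat) B := find P (iota 0 B).

Lemma fst_le (P : pred nat) B : fst P B <= B.
Proof. by rewrite /fst; have := find_size P (iota 0 B); rewrite size_iota. Qed.

Lemma fst_min (P : pred nat) B y : y < fst P B -> ~~ P y.
Proof.
move=> hy; have hB : y < B by apply: leq_trans hy (fst_le P B).
have := before_find 0 hy; rewrite nth_iota // add0n => ->; done.
Qed.

Lemma fst_lt (P : pred nat) B : fst P B < B -> P (fst P B).
Proof.
move=> h; have hh : has P (iota 0 B) by rewrite has_find size_iota.
have := nth_find 0 hh; rewrite nth_iota //; by rewrite size_iota in h.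
Qed.

Lemma fstP (P : pred nat) B x : x < B -> P x -> fst P B <= x /\ P (fst P B).
Proof.
move=> hx Px.
have hle : fst P B <= x.
  by rewrite leqNgt; apply/negP => /fst_min; rewrite Px.
by split => //; apply: fst_lt; apply: leq_ltn_trans hle hx.
Qed.

Definition mxJ N (J : pred nat) := N - fst (fun k => J (N - k)) N.+1.
Definition mnJ N (J : pred nat) := fst J N.+1.
Definition runJ N (J : pred nat) := fst (fun k => ~~ J (mxJ N J - k)) N.+1.
Definition Delta' N s M sg : seq nat :=
  if s < N.+1 then
    if s <= sg then (if s == M - s + 1 then [::] else [:: s; M - s + 1; M + 1])
    else (if M == sg + sg then [::] else [:: M; M - sg; sg])
  else [::].
Definition Delta N (J : pred nat) := Delta' N (mnJ N J) (mxJ N J) (runJ N J).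

Definition bnd N (J : pred nat) := forall x, J x -> 0 < x <= N.

Lemma mx_spec N (J : pred nat) x0 : bnd N J -> J x0 ->
  J (mxJ N J) /\ forall y, J y -> y <= mxJ N J.
Proof.
move=> hb Jx0; have := hb _ Jx0 => /andP [h1 h2].
have [hf Pf] := @fstP (fun k => J (N - k)) N.+1 (N - x0) ltac:(lia)
  ltac:(by rewrite /= subKn).
split => // y Jy; have := hb _ Jy => /andP [h3 h4].
have : fst (fun k => J (N - k)) N.+1 <= N - y.
  rewrite leqNgt; apply/negP => /fst_min /=; rewrite subKn // Jy //.
rewrite /mxJ; lia.
Qed.

Lemma mn_spec N (J : pred nat) x0 : bnd N J -> J x0 ->
  [/\ J (mnJ N J), mnJ N J < N.+1 & forall y, J y -> mnJ N J <= y].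
Proof.
move=> hb Jx0; have := hb _ Jx0 => /andP [h1 h2].
have [hf Pf] := @fstP J N.+1 x0 ltac:(lia) Jx0.
split => //; first by rewrite /mnJ; lia.
move=> y Jy; have := hb _ Jy => /andP [h3 h4].
rewrite leqNgt; apply/negP => /fst_min; rewrite Jy //.
Qed.

Lemma run_spec N (J : pred nat) x0 : bnd N J -> J x0 ->
  [/\ forall k, k < runJ N J -> J (mxJ N J - k), ~~ J (mxJ N J - runJ N J)
    & runJ N J <= mxJ N J].
Proof.
move=> hb Jx0; have [JM hM] := mx_spec hb Jx0.
have := hb _ JM => /andP [h1 h2].
have J0 : ~~ J 0 by apply/negP => /hb.
have [hf Pf] := @fstP (fun k => ~~ J (mxJ N J - k)) N.+1 (mxJ N J) ltac:(lia)
  ltac:(by rewrite /= subnn).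
split => // k hk; have := fst_min hk; by rewrite negbK.
Qed.

Lemma mx_eq N (J : pred nat) x : bnd N J -> J x -> (forall y, J y -> y <= x) -> mxJ N J = x.
Proof.
move=> hb Jx hx; have [JM hM] := mx_spec hb Jx.
have := hx _ JM; have := hM _ Jx; lia.
Qed.

Lemma run_eq N (J : pred nat) sg : bnd N J -> J (mxJ N J) ->
  (forall k, k < sg -> J (mxJ N J - k)) -> ~~ J (mxJ N J - sg) -> runJ N J = sg.
Proof.
move=> hb JM h1 h2; have [r1 r2 r3] := run_spec hb JM.
case: (ltngtP (runJ N J) sg) => // h.
  by have := h1 _ h; rewrite (negbTE r2).
by have := r1 _ h; rewrite (negbTE h2).
Qed.

Lemma run_ge N (J : pred nat) sg : bnd N J -> J (mxJ N J) ->
  (forall k, k < sg -> J (mxJ N J - k)) -> sg <= runJ N J.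
Proof.
move=> hb JM h1; have [r1 r2 r3] := run_spec hb JM.
rewrite leqNgt; apply/negP => h.
by have := h1 _ h; rewrite (negbTE r2).
Qed.

Lemma mn_eq N (J : pred nat) x : bnd N J -> J x -> (forall y, J y -> x <= y) -> mnJ N J = x.
Proof.
move=> hb Jx hx; have [Jm _ hm] := mn_spec hb Jx.
have := hx _ Jm; have := hm _ Jx; lia.
Qed.

Definition H2 N (J : pred nat) := forall x y, J x -> J y -> x < y -> x + y <= N.


Lemma Delta_A N (J : pred nat) s M sg : bnd N J -> H2 N J ->
  mnJ N J = s -> mxJ N J = M -> runJ N J = sg -> s < N.+1 -> s <= sg ->
  s != M - s + 1 ->
  [/\ uniq [:: s; M - s + 1; M + 1],
      (forall x, x \in [:: s; M - s + 1; M + 1] -> 0 < x <= N),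
      \sum_(x <- [:: s; M - s + 1; M + 1] | J x) x =
        \sum_(x <- [:: s; M - s + 1; M + 1] | ~~ J x) x &
      Delta N (fun x => J x (+) (x \in [:: s; M - s + 1; M + 1])) =i
        [:: s; M - s + 1; M + 1]].
Proof.
move=> hb h2 es eM esg hsN hs hne.
have Js : J s by rewrite -es; apply: fst_lt; rewrite -/(mnJ N J) es.
have [_ _ hmin] := mn_spec hb Js; rewrite es in hmin.
have [JM hmax] := mx_spec hb Js; rewrite eM in JM hmax.
have [hr1 hr2 hr3] := run_spec hb Js; rewrite eM esg in hr1 hr2 hr3.
have s1 := hb _ Js.
have sM : s <= M := hmax _ Js.
have Jb : J (M - s + 1).
  by have := hr1 (s - 1) ltac:(lia); rewrite (_ : M - (s - 1) = M - s + 1) //; lia.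
have hsb : s <= M - sg + 1.
  by have := hmin _ (hr1 (sg - 1) ltac:(lia)); lia.
have hsM : s < M by lia.
have nJM1 : ~~ J (M + 1) by apply/negP => /hmax; lia.
have MN := hb _ JM.
have hM1 : M + 1 <= N by have := h2 _ _ Js JM hsM; lia.
set D := [:: s; M - s + 1; M + 1].
have hD : forall x, x \in D -> 0 < x <= N.
  by move=> x; rewrite !inE => /or3P [] /eqP ->; lia.
split => //.
- by rewrite /= !inE; lia.
- by rewrite !big_cons !big_nil Js Jb (negbTE nJM1) /=; lia.
set J' := fun x => J x (+) (x \in D).
have hb' : bnd N J'.
  move=> x; rewrite /J'; case Jx: (J x); first by move=> _; apply: hb.
  by move=> /= /hD.
have JM1' : J' (M + 1) by rewrite /J' (negbTE nJM1) !inE eqxx !orbT.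
have mx' : mxJ N J' = M + 1.
  apply: mx_eq hb' JM1' _ => y; rewrite /J'; case Jy: (J y) => /=.
    by move=> _; have := hmax _ Jy; lia.
  by rewrite !inE => /or3P [] /eqP ->; lia.
have run' : runJ N J' = s.
  apply: (run_eq hb' ltac:(by rewrite mx')); rewrite mx'.
    move=> k hk; rewrite /J'; case: k hk => [|k] hk.
      by rewrite subn0.
    have Jk : J (M + 1 - k.+1).
      by rewrite (_ : M + 1 - k.+1 = M - k); [apply: hr1; lia | lia].
    rewrite Jk !inE /=; lia.
  by rewrite /J' (_ : M + 1 - s = M - s + 1) ?Jb ?inE ?eqxx ?orbT //; lia.
have [Jm' hm'N _] := mn_spec hb' JM1'.
have hgt : s < mnJ N J'.
  move: Jm'; set y := mnJ N J'; rewrite /J'; case Jy: (J y) => /=.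
    rewrite !inE => hh; have := hmin _ Jy; lia.
  rewrite !inE => /or3P [] /eqP hy.
  - by rewrite hy Js in Jy.
  - by rewrite hy Jb in Jy.
  - lia.
rewrite /Delta /Delta' mx' run' hm'N leqNgt hgt /=.
have -> : (M + 1 == s + s) = false by apply/eqP; lia.
rewrite (_ : M + 1 - s = M - s + 1); last lia.
move=> x; rewrite !inE.
by case: (x == s); case: (x == M - s + 1); case: (x == M + 1).
Qed.

Lemma Delta_B N (J : pred nat) s M sg : bnd N J ->
  mnJ N J = s -> mxJ N J = M -> runJ N J = sg -> s < N.+1 -> sg < s ->
  M != sg + sg ->
  [/\ uniq [:: M; M - sg; sg],
      (forall x, x \in [:: M; M - sg; sg] -> 0 < x <= N),
      \sum_(x <- [:: M; M - sg; sg] | J x) x =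
        \sum_(x <- [:: M; M - sg; sg] | ~~ J x) x &
      Delta N (fun x => J x (+) (x \in [:: M; M - sg; sg])) =i
        [:: M; M - sg; sg]].
Proof.
move=> hb es eM esg hsN hs hne.
have Js : J s by rewrite -es; apply: fst_lt; rewrite -/(mnJ N J) es.
have [_ _ hmin] := mn_spec hb Js; rewrite es in hmin.
have [JM hmax] := mx_spec hb Js; rewrite eM in JM hmax.
have [hr1 hr2 hr3] := run_spec hb Js; rewrite eM esg in hr1 hr2 hr3.
have s1 := hb _ Js.
have MN := hb _ JM.
have sg1 : 0 < sg.
  by case: sg hr1 hr2 hs {hne esg hr3} => // _; rewrite subn0 JM.
have hbot : s <= M - sg + 1.
  by have := hmin _ (hr1 (sg - 1) ltac:(lia)); rewrite (_ : M - (sg - 1) = M - sg + 1) //; lia.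
have hlt : sg < M - sg by lia.
have nJs : ~~ J sg by apply/negP => /hmin; lia.
set D := [:: M; M - sg; sg].
have hD : forall x, x \in D -> 0 < x <= N.
  by move=> x; rewrite !inE => /or3P [] /eqP ->; lia.
split => //.
- by rewrite /= !inE; lia.
- by rewrite !big_cons !big_nil JM (negbTE hr2) (negbTE nJs) /=; lia.
set J' := fun x => J x (+) (x \in D).
have hb' : bnd N J'.
  move=> x; rewrite /J'; case Jx: (J x); first by move=> _; apply: hb.
  by move=> /= /hD.
have Jsg' : J' sg by rewrite /J' (negbTE nJs) !inE eqxx !orbT.
have mn' : mnJ N J' = sg.
  apply: mn_eq hb' Jsg' _ => y; rewrite /J'; case Jy: (J y) => /=.
    by move=> _; have := hmin _ Jy; lia.
  by rewrite !inE => /or3P [] /eqP ->; lia.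
have JM1' : J' (M - 1).
  rewrite /J'; have [e1|ne1] := eqVneq sg 1.
    by rewrite (_ : M - 1 = M - sg) ?(negbTE hr2) ?inE ?eqxx ?orbT //; lia.
  have JM1 : J (M - 1) by apply: hr1; lia.
  by rewrite JM1 !inE /=; lia.
have mx' : mxJ N J' = M - 1.
  apply: mx_eq hb' JM1' _ => y; rewrite /J'; case Jy: (J y) => /=.
    by rewrite !inE => hh; have := hmax _ Jy; lia.
  rewrite !inE => /or3P [] /eqP hy; last by lia.
    by rewrite hy JM in Jy.
  lia.
have run' : sg <= runJ N J'.
  apply: (run_ge hb' ltac:(by rewrite mx')); rewrite mx' => k hk.
  rewrite /J'; have [e1|ne1] := eqVneq k (sg - 1).
    by rewrite (_ : M - 1 - k = M - sg) ?(negbTE hr2) ?inE ?eqxx ?orbT //; lia.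
  have Jk : J (M - 1 - k).
    by rewrite (_ : M - 1 - k = M - k.+1); [apply: hr1; lia | lia].
  by rewrite Jk !inE /=; lia.
rewrite /Delta /Delta' mn' mx' (_ : sg < N.+1) ?run' /=; last by lia.
have -> : (sg == M - 1 - sg + 1) = false by apply/eqP; lia.
rewrite (_ : M - 1 - sg + 1 = M - sg); last lia.
rewrite (_ : M - 1 + 1 = M); last lia.
move=> x; rewrite !inE.
by case: (x == sg); case: (x == M - sg); case: (x == M).
Qed.


Lemma sum_conv N (D : seq nat) (F : nat -> nat) : uniq D ->
  (forall x, x \in D -> 0 < x <= N) ->
  \sum_(i < N | i.+1 \in D) F i.+1 = \sum_(x <- D) F x.
Proof.
move=> uD hD.
rewrite -(big_mkord (fun i => i.+1 \in D) (fun i => F i.+1)).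
have -> : \sum_(0 <= i < N | i.+1 \in D) F i.+1 = \sum_(x <- iota 1 N | x \in D) F x.
  by rewrite /index_iota subn0 (iotaDl 1 0 N) big_map.
rewrite -big_filter; apply: perm_big; apply: uniq_perm => //.
  by rewrite filter_uniq // iota_uniq.
move=> x; rewrite mem_filter mem_iota; case xD: (x \in D) => //=.
by have := hD _ xD; lia.
Qed.

Lemma Delta_ext N (J1 J2 : pred nat) : J1 =1 J2 -> Delta N J1 = Delta N J2.
Proof.
move=> h.
have e1 : mnJ N J1 = mnJ N J2 by rewrite /mnJ /fst (eq_find h).
have e2 : mxJ N J1 = mxJ N J2.
  by rewrite /mxJ /fst (@eq_find _ (fun k => J1 (N - k)) (fun k => J2 (N - k))).
have e3 : runJ N J1 = runJ N J2.
  rewrite /runJ e2 /fst (@eq_find _ (fun k => ~~ J1 (mxJ N J2 - k)) (fun k => ~~ J2 (mxJ N J2 - k))) //.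
  by move=> k /=; rewrite h.
by rewrite /Delta e1 e2 e3.
Qed.

Lemma Delta_props N (J : pred nat) : bnd N J -> H2 N J -> Delta N J != [::] ->
  [/\ uniq (Delta N J), (forall x, x \in Delta N J -> 0 < x <= N),
      \sum_(x <- Delta N J | J x) x = \sum_(x <- Delta N J | ~~ J x) x &
      Delta N (fun x => J x (+) (x \in Delta N J)) =i Delta N J].
Proof.
move=> hb h2.
have : Delta N J = Delta' N (mnJ N J) (mxJ N J) (runJ N J) by [].
move es: (mnJ N J) => s; move eM: (mxJ N J) => M; move esg: (runJ N J) => sg.
rewrite /Delta'; case: ifP => hsN; last by move=> ->; rewrite eqxx.
case: ifP => hs.
  case: ifP => hne; first by move=> ->; rewrite eqxx.
  move=> ->  _; apply: (@Delta_A _ _ s M sg) => //; exact: negbT hne.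
case: ifP => hne; first by move=> ->; rewrite eqxx.
move=> -> _; apply: (@Delta_B _ _ s M sg) => //; [lia | exact: negbT hne].
Qed.

Lemma sum_iota lo n : 2 * (\sum_(x <- iota lo n) x) + n = n * (2 * lo + n).
Proof.
elim: n => [|n IH]; first by rewrite big_nil.
have -> : iota lo n.+1 = iota lo n ++ [:: lo + n] by rewrite -addn1 iotaD.
rewrite big_cat big_seq1 /=; nia.
Qed.

Lemma sum_interval N (J : pred nat) lo n : 0 < lo -> lo + n <= N.+1 ->
  (forall x, J x = (x \in iota lo n)) ->
  \sum_(i < N | J i.+1) i.+1 = \sum_(x <- iota lo n) x.
Proof.
move=> h1 h2 hJ.
rewrite (eq_bigl (fun i : 'I_N => i.+1 \in iota lo n)); last by move=> i; rewrite hJ.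
apply: (sum_conv (fun x => x)); first exact: iota_uniq.
by move=> x; rewrite mem_iota; lia.
Qed.

Lemma Delta_nil N (J : pred nat) : bnd N J -> Delta N J = [::] ->
  exists y, 24 * (\sum_(i < N | J i.+1) i.+1) + 1 = y ^ 2.
Proof.
move=> hb.
have : Delta N J = Delta' N (mnJ N J) (mxJ N J) (runJ N J) by [].
move es: (mnJ N J) => s; move eM: (mxJ N J) => M; move esg: (runJ N J) => sg.
rewrite /Delta'; case: ifP => hsN; last first.
  move=> _ _; exists 1; rewrite big_pred0 // => i.
  apply/negP => Ji; have [_ h _] := mn_spec hb Ji; rewrite es in h; lia.
have Js : J s by rewrite -es; apply: fst_lt; rewrite -/(mnJ N J) es.
have [_ _ hmin] := mn_spec hb Js; rewrite es in hmin.
have [JM hmax] := mx_spec hb Js; rewrite eM in JM hmax.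
have [hr1 hr2 hr3] := run_spec hb Js; rewrite eM esg in hr1 hr2 hr3.
have s1 := hb _ Js.
have MN := hb _ JM.
case: ifP => hs.
  case: ifP => [/eqP hne _ _ | _ -> //].
  have hJ : forall x, J x = (x \in iota s s).
    move=> x; rewrite mem_iota; case Jx: (J x).
      by have := hmin _ Jx; have := hmax _ Jx; lia.
    apply/esym/negP => hx; have := hr1 (M - x) ltac:(lia).
    by rewrite (_ : M - (M - x) = x) ?Jx //; lia.
  rewrite (@sum_interval N J s s _ _ hJ); try lia.
  exists (6 * s - 1); have := sum_iota s s; nia.
case: ifP => [/eqP hne _ _ | _ -> //].
have sg1 : 0 < sg.
  by case: sg hr1 hr2 hs {hne esg hr3} => // _; rewrite subn0 JM.
have hJ : forall x, J x = (x \in iota sg.+1 sg).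
  move=> x; rewrite mem_iota; case Jx: (J x).
    by have := hmin _ Jx; have := hmax _ Jx; lia.
  apply/esym/negP => hx; have := hr1 (M - x) ltac:(lia).
  by rewrite (_ : M - (M - x) = x) ?Jx //; lia.
rewrite (@sum_interval N J sg.+1 sg _ _ hJ); try lia.
exists (6 * sg + 1); have := sum_iota sg.+1 sg; nia.
Qed.


Lemma even_invol (T : finType) (A : {set T}) (g : T -> T) :
  (forall x, x \in A -> g x \in A) -> (forall x, x \in A -> g (g x) = x) ->
  (forall x, x \in A -> g x != x) -> ~~ odd #|A|.
Proof.
move=> gA gg gn.
suff H : forall n (B : {set T}), #|B| <= n -> B \subset A ->
    (forall x, x \in B -> g x \in B) -> ~~ odd #|B|.
  by apply: (H #|A|) => //; apply: subxx.
elim=> [|n IH] B hB sBA gB.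
  by move: hB; rewrite leqn0 => /eqP ->.
have [->|/set0Pn [x xB]] := eqVneq B set0; first by rewrite cards0.
have xA : x \in A by apply: (subsetP sBA).
have gxB : g x \in B :\ x by rewrite !inE gn // gB.
have e : #|B| = (#|B :\ x :\ g x|).+2.
  by rewrite (cardsD1 x B) xB (cardsD1 (g x) (B :\ x)) gxB.
rewrite e /= negbK.
apply: IH.
- by rewrite e in hB; lia.
- by apply: subset_trans sBA; apply: subset_trans (subsetDl _ _) (subsetDl _ _).
move=> y; rewrite !inE => /and3P [ny1 ny2 yB].
have yA : y \in A by apply: (subsetP sBA).
rewrite gB // andbT; apply/andP; split; apply/eqP => h.
  by move/eqP: ny2; apply; rewrite -(gg _ yA) h gg.
by move/eqP: ny1; apply; rewrite -(gg _ yA) h.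
Qed.


Definition jb p x := x %% p != 0.
Definition tog p b x := if jb p x then x - b else x + b.
Definition kk p b x := (x - jb p x * b) %/ p.

Lemma allowedP p r a m x : reflect
  (exists j k, [/\ j < 2, k < m & x = j * (p * r + a) + p * k])
  (allowed_mult p r a m x).
Proof.
apply: (iffP existsP) => [[j /existsP [k /eqP e]] | [j [k [hj hk e]]]].
  by exists j, k.
by exists (Ordinal hj); apply/existsP; exists (Ordinal hk); apply/eqP.
Qed.

Lemma ap_neq0 p a : 1 < p -> coprime a p -> a %% p != 0.
Proof.
move=> hp hc; apply/negP => /eqP h.
have hd : p %| a by rewrite /dvdn h.
move: hc; rewrite /coprime; move/gcdn_idPr: hd => ->; lia.
Qed.

Lemma allowed_dec p r a m x : 1 < p -> a %% p != 0 ->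
  allowed_mult p r a m x ->
  exists k, k < m /\ x = jb p x * (p * r + a) + p * k.
Proof.
move=> hp ha /allowedP [j [k [hj hk e]]]; exists k; split => //.
have hjb : jb p x = (j == 1).
  rewrite /jb e; case: j hj e => [|[|j]] // _ _.
    by rewrite mul0n add0n modnMr eqxx.
  by rewrite mul1n addnAC -mulnDr mulnC modnMDl.
by rewrite hjb e; case: j hj {e hjb} => [|[|j]].
Qed.


Lemma allowed_cases p r a m x : 1 < p -> a %% p != 0 ->
  allowed_mult p r a m x ->
  exists k, k < m /\
    ((jb p x /\ x = (p * r + a) + p * k) \/ (~~ jb p x /\ x = p * k)).
Proof.
move=> hp ha hx; have [k [hk e]] := allowed_dec hp ha hx; exists k; split => //.
move: e; case: (jb p x) => /= e; [left | right]; split => //; lia.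
Qed.

Lemma jb_form p r a k j : 1 < p -> a %% p != 0 -> j < 2 ->
  jb p (j * (p * r + a) + p * k) = (j == 1).
Proof.
move=> hp ha hj; rewrite /jb; case: j hj => [|[|j]] // _.
  by rewrite mul0n add0n modnMr eqxx.
by rewrite mul1n addnAC -mulnDr mulnC modnMDl.
Qed.

Lemma tog_props p r a m x : 1 < p -> a %% p != 0 -> allowed_mult p r a m x ->
  [/\ allowed_mult p r a m (tog p (p * r + a) x),
      jb p (tog p (p * r + a) x) = ~~ jb p x,
      tog p (p * r + a) (tog p (p * r + a) x) = x &
      (0 < a -> tog p (p * r + a) x != x)].
Proof.
move=> hp ha hx; have [k [hk [[J e]|[J e]]]] := allowed_cases hp ha hx.
  have e1 : tog p (p * r + a) x = 0 * (p * r + a) + p * k by rewrite /tog J; lia.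
  have J1 : jb p (tog p (p * r + a) x) = false by rewrite e1 jb_form.
  split.
  - by apply/allowedP; exists 0, k; rewrite e1.
  - by rewrite J1 J.
  - by rewrite /tog J1 J; lia.
  - by rewrite /tog J; lia.
have e1 : tog p (p * r + a) x = 1 * (p * r + a) + p * k by rewrite /tog (negbTE J); lia.
have J1 : jb p (tog p (p * r + a) x) = true by rewrite e1 jb_form.
split.
- by apply/allowedP; exists 1, k; rewrite e1.
- by rewrite J1 (negbTE J).
- by rewrite {1}/tog J1 e1 /=; lia.
- by rewrite /tog (negbTE J); lia.
Qed.

Lemma allowed_kk p r a m x : 1 < p -> a %% p != 0 -> allowed_mult p r a m x ->
  x = jb p x * (p * r + a) + p * kk p (p * r + a) x.
Proof.
move=> hp ha hx; have [k [hk e]] := allowed_dec hp ha hx.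
rewrite /kk; have -> : x - jb p x * (p * r + a) = p * k by lia.
by rewrite mulKn; lia.
Qed.

Lemma jb_pos p x : jb p x -> 0 < x.
Proof. by rewrite /jb; case: x => //; rewrite mod0n eqxx. Qed.


Definition Jf p N (f : {ffun 'I_N -> 'I_N.+1}) : pred nat :=
  fun x => [exists i : 'I_N, (i.+1 == x) && jb p (f i)].
Arguments Jf : clear implicits.
Definition Df p N (f : {ffun 'I_N -> 'I_N.+1}) := Delta N (Jf p N f).
Arguments Df : clear implicits.
Definition gfun p b N (f : {ffun 'I_N -> 'I_N.+1}) (i : 'I_N) : nat :=
  if i.+1 \in Df p N f then tog p b (f i) else f i.
Arguments gfun : clear implicits.
Definition iof p b N (f : {ffun 'I_N -> 'I_N.+1}) : {ffun 'I_N -> 'I_N.+1} :=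
  [ffun i => inord (gfun p b N f i)].
Arguments iof : clear implicits.
Definition inA p r a m N (f : {ffun 'I_N -> 'I_N.+1}) :=
  ((\sum_(i < N) (i.+1) * f i)%N == N) && [forall i : 'I_N, allowed_mult p r a m (f i)].
Arguments inA : clear implicits.

Lemma Jf_S p N (f : {ffun 'I_N -> 'I_N.+1}) (i : 'I_N) : Jf p N f i.+1 = jb p (f i).
Proof.
apply/existsP/idP => [[j /andP [/eqP e h]] | h]; last by exists i; rewrite eqxx h.
by have -> : i = j by apply: val_inj; case: e.
Qed.

Lemma Jf_bnd p N (f : {ffun 'I_N -> 'I_N.+1}) : bnd N (Jf p N f).
Proof. by move=> x /existsP [i /andP [/eqP <- _]]; rewrite ltn_ord. Qed.

Lemma sum_J p N (f : {ffun 'I_N -> 'I_N.+1}) :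
  \sum_(i < N) i.+1 * jb p (f i) = \sum_(i < N | Jf p N f i.+1) i.+1.
Proof.
rewrite [RHS]big_mkcond; apply: eq_bigr => i _; rewrite Jf_S.
by case: (jb p (f i)); rewrite ?muln1 ?muln0.
Qed.

Lemma congr_N p r a m N (f : {ffun 'I_N -> 'I_N.+1}) : 1 < p -> a %% p != 0 -> inA p r a m N f ->
  exists K, N = (p * r + a) * (\sum_(i < N | Jf p N f i.+1) i.+1) + p * K.
Proof.
move=> hp ha /andP [/eqP hs /forallP hal].
exists (\sum_(i < N) i.+1 * kk p (p * r + a) (f i)).
rewrite -{1}hs -sum_J !big_distrr -big_split; apply: eq_bigr => i _ /=.
rewrite {1}(allowed_kk hp ha (hal i)); nia.
Qed.

Lemma sum_DP N (D : seq nat) (P : pred nat) : uniq D ->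
  (forall x, x \in D -> 0 < x <= N) ->
  \sum_(i < N) (if (i.+1 \in D) && P i.+1 then i.+1 else 0) = \sum_(x <- D | P x) x.
Proof.
move=> uD hD; rewrite [RHS]big_mkcond /=.
have := sum_conv (fun x => if P x then x else 0) uD hD; rewrite /= => <-.
rewrite [RHS]big_mkcond /=.
by apply: eq_bigr => i _; case: (i.+1 \in D).
Qed.

Lemma H2_J p r a m N (f : {ffun 'I_N -> 'I_N.+1}) : 1 < p -> a %% p != 0 -> inA p r a m N f -> H2 N (Jf p N f).
Proof.
move=> hp ha /andP [/eqP hs _] x y Jx Jy hxy.
have hb := @Jf_bnd p N f.
have uxy : uniq [:: x; y] by rewrite /= inE andbT; lia.
have hxy' : forall z, z \in [:: x; y] -> 0 < z <= N.
  by move=> z; rewrite !inE => /orP [] /eqP ->; apply: hb.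
have e1 := @sum_conv N [:: x; y] (fun z => z) uxy hxy'.
rewrite /= !big_cons big_nil addn0 in e1.
have h1 : x + y <= \sum_(i < N | i.+1 \in [:: x; y]) i.+1 * f i.
  rewrite -e1; apply: leq_sum => i; rewrite !inE => /orP [] /eqP e.
    have : jb p (f i) by rewrite -Jf_S e.
    by move/jb_pos => h; apply: leq_pmulr.
  have : jb p (f i) by rewrite -Jf_S e.
  by move/jb_pos => h; apply: leq_pmulr.
have h2 : \sum_(i < N | i.+1 \in [:: x; y]) i.+1 * f i <= \sum_(i < N) i.+1 * f i.
  rewrite [X in _ <= X](bigID (fun i : 'I_N => i.+1 \in [:: x; y])) /=.
  exact: leq_addr.
rewrite hs in h2; lia.
Qed.

Lemma sum_g p r a m N (f : {ffun 'I_N -> 'I_N.+1}) : 1 < p -> a %% p != 0 -> inA p r a m N f ->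
  Df p N f != [::] -> \sum_(i < N) i.+1 * gfun p (p * r + a) N f i = N.
Proof.
move=> hp ha hA hne; have [uD hD hsum _] := Delta_props (@Jf_bnd p N f) (H2_J hp ha hA) hne.
move: (hA) => /andP [/eqP hs /forallP hal].
set b := p * r + a.
have hterm : forall i : 'I_N,
  i.+1 * gfun p b N f i + b * (if (i.+1 \in Df p N f) && Jf p N f i.+1 then i.+1 else 0)
  = i.+1 * f i + b * (if (i.+1 \in Df p N f) && ~~ Jf p N f i.+1 then i.+1 else 0).
  move=> i; rewrite /gfun Jf_S; case: (i.+1 \in Df p N f) => /=; last by rewrite !muln0.
  have [k [hk [[J e]|[J e]]]] := allowed_cases hp ha (hal i).
    by rewrite /tog J /= e /b; nia.
  by rewrite /tog (negbTE J) /= e /b; nia.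
have E : \sum_(i < N) i.+1 * gfun p b N f i + b * \sum_(x <- Df p N f | Jf p N f x) x
  = \sum_(i < N) i.+1 * f i + b * \sum_(x <- Df p N f | ~~ Jf p N f x) x.
  rewrite -!(@sum_DP N) // !big_distrr -!big_split.
  by apply: eq_bigr => i _; exact: hterm.
rewrite hsum hs -/(Df p N f) in E; lia.
Qed.


Lemma iof_val p r a m N (f : {ffun 'I_N -> 'I_N.+1}) (i : 'I_N) :
  1 < p -> a %% p != 0 -> inA p r a m N f -> Df p N f != [::] ->
  (iof p (p * r + a) N f i : nat) = gfun p (p * r + a) N f i.
Proof.
move=> hp ha hA hne; rewrite ffunE inordK // ltnS.
have := sum_g hp ha hA hne; rewrite (bigD1 i) //= => e.
have : i.+1 * gfun p (p * r + a) N f i <= N by rewrite -[X in _ <= X]e leq_addr.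
by apply: leq_trans; apply: leq_pmull.
Qed.

Lemma gfun_allowed p r a m N (f : {ffun 'I_N -> 'I_N.+1}) (i : 'I_N) :
  1 < p -> a %% p != 0 -> inA p r a m N f ->
  allowed_mult p r a m (gfun p (p * r + a) N f i).
Proof.
move=> hp ha /andP [_ /forallP hal]; rewrite /gfun; case: ifP => _ //.
by have [] := tog_props hp ha (hal i).
Qed.

Lemma iof_in p r a m N (f : {ffun 'I_N -> 'I_N.+1}) :
  1 < p -> a %% p != 0 -> inA p r a m N f -> Df p N f != [::] ->
  inA p r a m N (iof p (p * r + a) N f).
Proof.
move=> hp ha hA hne; apply/andP; split.
  rewrite -[X in _ == X](sum_g hp ha hA hne); apply/eqP; apply: eq_bigr => i _.
  by rewrite (iof_val _ hp ha hA hne).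
apply/forallP => i; rewrite (iof_val _ hp ha hA hne); exact: gfun_allowed.
Qed.

Lemma Jf_iof p r a m N (f : {ffun 'I_N -> 'I_N.+1}) :
  1 < p -> a %% p != 0 -> inA p r a m N f -> Df p N f != [::] ->
  Jf p N (iof p (p * r + a) N f) =1 (fun x => Jf p N f x (+) (x \in Df p N f)).
Proof.
move=> hp ha hA hne x.
have [uD hD _ _] := Delta_props (@Jf_bnd p N f) (H2_J hp ha hA) hne.
have /andP [_ /forallP hal] := hA.
case hx: (0 < x <= N).
  have hi : x.-1 < N by lia.
  have ex : x = (Ordinal hi).+1 by rewrite /=; lia.
  rewrite ex !Jf_S (iof_val _ hp ha hA hne) /gfun -/(Df p N f).
  case: ifP => _; last by rewrite addbF.
  by have [_ -> _ _] := tog_props hp ha (hal (Ordinal hi)); rewrite addbT.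
have n1 : Jf p N (iof p (p * r + a) N f) x = false.
  by apply/negbTE/negP => hJ; have := Jf_bnd hJ; rewrite hx.
have n2 : Jf p N f x = false by apply/negbTE/negP => hJ; have := Jf_bnd hJ; rewrite hx.
have n3 : (x \in Df p N f) = false by apply/negbTE/negP => /hD; rewrite hx.
by rewrite n1 n2 n3.
Qed.

Lemma iof_invol p r a m N (f : {ffun 'I_N -> 'I_N.+1}) :
  1 < p -> a %% p != 0 -> inA p r a m N f -> Df p N f != [::] ->
  iof p (p * r + a) N (iof p (p * r + a) N f) = f.
Proof.
move=> hp ha hA hne.
have [uD hD _ hDD] := Delta_props (@Jf_bnd p N f) (H2_J hp ha hA) hne.
have /andP [_ /forallP hal] := hA.
have eD : Df p N (iof p (p * r + a) N f) =i Df p N f.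
  by move=> x; rewrite /Df (Delta_ext _ (Jf_iof hp ha hA hne)) hDD.
apply/ffunP => i; rewrite ffunE {1}/gfun eD (iof_val _ hp ha hA hne) /gfun.
case: (i.+1 \in Df p N f) => /=; last by rewrite inord_val.
by have [_ _ -> _] := tog_props hp ha (hal i); rewrite inord_val.
Qed.

Lemma iof_neq p r a m N (f : {ffun 'I_N -> 'I_N.+1}) :
  1 < p -> a %% p != 0 -> 0 < a -> inA p r a m N f -> Df p N f != [::] ->
  iof p (p * r + a) N f != f.
Proof.
move=> hp ha ha0 hA hne.
have [uD hD _ _] := Delta_props (@Jf_bnd p N f) (H2_J hp ha hA) hne.
have /andP [_ /forallP hal] := hA.
case eD: (Df p N f) hne => [//|x s] _.
have := hD x; rewrite -/(Df p N f) eD mem_head => /(_ isT) hx.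
have hi : x.-1 < N by lia.
apply/negP => /eqP e.
have := congr1 (fun h : {ffun 'I_N -> 'I_N.+1} => (h (Ordinal hi) : nat)) e.
rewrite /= (iof_val _ hp ha hA) ?eD // /gfun eD.
rewrite (_ : (Ordinal hi).+1 = x) /=; last by lia.
rewrite mem_head; apply/eqP.
by have [_ _ _ ->] := tog_props hp ha (hal (Ordinal hi)).
Qed.


Unset Implicit Arguments.
Import Order.TTheory GRing.Theory Num.Theory.
Local Open Scope ring_scope.

Theorem theorem4p2 (p a r m : nat) (t ainv : int) :
  prime p -> (3 < p)%N -> (0 < a)%N -> coprime a p -> (1 <= m)%N ->
  (a%:Z * ainv = 1 %[mod p%:Z])%Z ->
  qnr p (24 * t * ainv + 1) ->
  forall n : nat, 0 <= (p * n)%:Z + t ->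
    ~~ odd (b2 p r a m (absz ((p * n)%:Z + t))).
Proof.
move=> pr p3 a0 cop m1 hinv hq n hn.
set N := absz ((p * n)%:Z + t).
have hp : (1 < p)%N by apply: prime_gt1.
have ha : (a %% p != 0)%N by apply: ap_neq0.
have hN : N%:Z = (p * n)%:Z + t by rewrite /N gez0_abs.
have nofix : forall f, inA p r a m N f -> Df p N f != [::].
  move=> f hA; apply/negP => /eqP hD0.
  have [y hy] := Delta_nil (@Jf_bnd p N f) hD0.
  have [K hK] := congr_N hp ha hA.
  set SJ := (\sum_(i < N | Jf p N f i.+1) i.+1)%N in hy hK.
  apply: hq; exists y%:Z.
  move: hinv => /eqP; rewrite eqz_mod_dvd => /dvdzP [c hc].
  apply/eqP; rewrite eqz_mod_dvd; apply/dvdzP.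
  have ey : (y%:Z) ^+ 2 = 24 * SJ%:Z + 1.
    by rewrite -mulnn in hy; rewrite expr2; nia.
  have et : t = (p%:Z * r%:Z + a%:Z) * SJ%:Z + p%:Z * K%:Z - p%:Z * n%:Z.
    by nia.
  exists (- 24 * (c * SJ%:Z + (r%:Z * SJ%:Z + K%:Z - n%:Z) * ainv)).
  have hc' : 1 + c * p%:Z - a%:Z * ainv = 0 by rewrite -hc; ring.
  rewrite ey et.
  transitivity (- 24 * (c * SJ%:Z + (r%:Z * SJ%:Z + K%:Z - n%:Z) * ainv) * p%:Z
                + 24 * SJ%:Z * (1 + c * p%:Z - a%:Z * ainv)); first by ring.
  by rewrite hc' mulr0 addr0.
rewrite /b2.
apply: (@even_invol _ _ (iof p (p * r + a) N)) => f; rewrite inE => hA.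
- by rewrite inE; exact: (iof_in hp ha hA (nofix f hA)).
- exact: (iof_invol hp ha hA (nofix f hA)).
- exact: (iof_neq hp ha a0 hA (nofix f hA)).
Qed.
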